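(* Let $M=(Q,\Sigma,\Delta,Q_\alpha,F)$ be a simple NFA and let $M_\circlearrowleft=(Q,\Sigma,\Delta_\circlearrowleft,Q_\alpha,F)$, where $\Delta_\circlearrowleft(q,\sigma)=\{q\}\cup\Delta(q,\sigma)$ if $q\in Q_\alpha$ and $\Delta_\circlearrowleft(q,\sigma)=\Delta(q,\sigma)$ otherwise. Then $M_\circlearrowleft$ is simple if and only if there do not exist $\sigma\in\Sigma$, $q_\alpha\in Q_\alpha$ and $q\in Q$ with $q\neq q_\alpha$ such that $q_\alpha\in\Delta(q,\sigma)$.
   Context: An NFA is a tuple $M=(Q,\Sigma,\Delta,Q_\alpha,F)$ where $Q$ is a finite set of states, $\Sigma$ a finite alphabet, $\Delta:Q\times\Sigma\to\mathcal{P}(Q)$ the transition function, $Q_\alpha\subseteq Q$ the set of start states and $F\subseteq Q$ the set of accepting states. $\Delta$ is extended to strings by $\hat\Delta(q,\varepsilon)=\{q\}$ and $\hat\Delta(q,\sigma s)=\bigcup_{p\in\Delta(q,\sigma)}\hat\Delta(p,s)$. The language of a state $q$ is $\mathcal{L}(q)=\{s\in\Sigma^*:\hat\Delta(q,s)\cap F\neq\emptyset\}$ (computed with respect to the transition function of the automaton under consideration). A state $q$ is accessible if $q\in\hat\Delta(q_\alpha,s)$ for some $q_\alpha\in Q_\alpha$, $s\in\Sigma^*$. An NFA is called simple if all its states are accessible and the languages $\mathcal{L}(q)$, $q\in Q$, are non-empty and pairwise disjoint. *)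

(* Defs.v *)
From mathcomp Require Import all_boot.
Set Implicit Arguments. Unset Strict Implicit. Unset Printing Implicit Defensive.

Record nfa (Q Sigma : finType) := NFA {
  delta : Q -> Sigma -> {set Q};
  starts : {set Q};
  finals : {set Q}
}.

Fixpoint hat_delta (Q Sigma : finType) (d : Q -> Sigma -> {set Q})
    (q : Q) (w : seq Sigma) : {set Q} :=
  match w with
  | [::] => [set q]
  | s :: w' => \bigcup_(p in d q s) hat_delta d p w'
  end.

Definition lang (Q Sigma : finType) (M : nfa Q Sigma) (q : Q) (w : seq Sigma) : Prop :=
  hat_delta (delta M) q w :&: finals M != set0.

Definition accessible (Q Sigma : finType) (M : nfa Q Sigma) (q : Q) : Prop :=
  exists qa, exists w : seq Sigma, qa \in starts M /\ q \in hat_delta (delta M) qa w.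

Definition simple (Q Sigma : finType) (M : nfa Q Sigma) : Prop :=
  (forall q, accessible M q) /\
  (forall q, exists w, lang M q w) /\
  (forall q1 q2, q1 <> q2 -> forall w, ~ (lang M q1 w /\ lang M q2 w)).

Definition loop_delta (Q Sigma : finType) (M : nfa Q Sigma) : Q -> Sigma -> {set Q} :=
  fun q s => if q \in starts M then q |: delta M q s else delta M q s.

Definition nfa_loop (Q Sigma : finType) (M : nfa Q Sigma) : nfa Q Sigma :=
  NFA (loop_delta M) (starts M) (finals M).

(* Main.v *)
Require Import Defs.
From mathcomp Require Import all_boot.
Set Implicit Arguments. Unset Strict Implicit. Unset Printing Implicit Defensive.

Section Aux.
Variables (Q Sigma : finType).

Lemma langE (M : nfa Q Sigma) q w :
  lang M q w <-> exists f, f \in hat_delta (delta M) q w /\ f \in finals M.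
Proof.
rewrite /lang; split.
- by case/set0Pn=> f /setIP [H1 H2]; exists f.
- by case=> f [H1 H2]; apply/set0Pn; exists f; apply/setIP.
Qed.

Lemma hat_cat (d : Q -> Sigma -> {set Q}) q u v x :
  x \in hat_delta d q (u ++ v) <-> exists p, p \in hat_delta d q u /\ x \in hat_delta d p v.
Proof.
elim: u q => [|s u IH] q /=.
- split; first by move=> H; exists q; rewrite in_set1.
  by case=> p []; rewrite in_set1 => /eqP ->.
- split.
  + case/bigcupP=> p Hp /IH [r [Hr Hx]]; exists r; split=> //.
    by apply/bigcupP; exists p.
  + case=> r [/bigcupP [p Hp Hr] Hx]; apply/bigcupP; exists p => //.
    by apply/IH; exists r.
Qed.

Lemma hat_mono (d d' : Q -> Sigma -> {set Q}) :
  (forall q s, d q s \subset d' q s) ->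
  forall w q, hat_delta d q w \subset hat_delta d' q w.
Proof.
move=> Hs; elim=> [|s w IH] q //=.
apply/subsetP=> x /bigcupP [p Hp Hx]; apply/bigcupP; exists p.
  by apply: (subsetP (Hs q s)).
by apply: (subsetP (IH p)).
Qed.

Lemma loop_sub (M : nfa Q Sigma) q s : delta M q s \subset loop_delta M q s.
Proof. rewrite /loop_delta; case: ifP => _ //; exact: subsetUr. Qed.

Lemma loop_stay (M : nfa Q Sigma) q u :
  q \in starts M -> q \in hat_delta (loop_delta M) q u.
Proof.
move=> Hq; elim: u => [|s u IH] /=; first by rewrite in_set1.
apply/bigcupP; exists q => //; rewrite /loop_delta Hq; exact: setU11.
Qed.

Lemma unreach (M : nfa Q Sigma) :
  ~ (exists (s : Sigma) (qa q : Q),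
        [/\ qa \in starts M, q <> qa & qa \in delta M q s]) ->
  forall u q qb, qb \in starts M -> qb \in hat_delta (delta M) q u -> q = qb.
Proof.
move=> Hn; elim=> [|s u IH] q qb Hb /=; first by rewrite in_set1 => /eqP.
case/bigcupP=> p Hp Hq; have Ep := IH _ _ Hb Hq; subst p.
case: (eqVneq q qb) => // Hne; exfalso; apply: Hn.
by exists s, qb, q; split=> //; apply/eqP.
Qed.

Lemma loop_decomp (M : nfa Q Sigma) :
  ~ (exists (s : Sigma) (qa q : Q),
        [/\ qa \in starts M, q <> qa & qa \in delta M q s]) ->
  forall w q x, x \in hat_delta (loop_delta M) q w ->
  exists u v, [/\ w = u ++ v, x \in hat_delta (delta M) q v &
                  (u = [::] \/ q \in starts M)].
Proof.
move=> Hn; elim=> [|s w IH] q x /=.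
  by move=> Hx; exists [::], [::]; split=> //; left.
case/bigcupP=> p Hp /IH [u' [v' [Ew Hx Hu']]].
have step : p \in delta M q s -> p != q ->
   exists u v, [/\ s :: w = u ++ v, x \in hat_delta (delta M) q v &
                  (u = [::] \/ q \in starts M)].
  move=> Hd Hpq; case: Hu' => [Eu|Hps].
    exists [::], (s :: v'); split=> //; first by rewrite Ew Eu.
    - by apply/bigcupP; exists p.
    - by left.
  exfalso; apply: Hn; exists s, p, q; split=> //; apply/eqP; by rewrite eq_sym.
rewrite /loop_delta in Hp; have [Hqs|Hqs] : (q \in starts M) \/ (q \notin starts M) by case: (q \in starts M); [left|right].
- rewrite Hqs in Hp; move: Hp; case/setU1P => [Epq|Hd].
  + subst p; exists (s :: u'), v'; split=> //; [by rewrite Ew | by right].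
  + case: (eqVneq p q) => [Epq|Hpq]; last exact: step.
    subst p; exists (s :: u'), v'; split=> //; [by rewrite Ew | by right].
- rewrite (negbTE Hqs) in Hp; move: Hp => Hd; case: (eqVneq p q) => [Epq|Hpq]; last exact: step.
  subst p; case: Hu' => [Eu|]; last by move=> H; rewrite H in Hqs.
  exists [::], (s :: v'); split=> //; first by rewrite Ew Eu.
  + by apply/bigcupP; exists q.
  + by left.
Qed.

Lemma split_le (u1 v1 u2 v2 : seq Sigma) :
  size u1 <= size u2 -> u1 ++ v1 = u2 ++ v2 ->
  exists t, v1 = t ++ v2 /\ size u2 = size u1 + size t.
Proof.
move=> Hs E.
exists (drop (size u1) u2); split.
  have := congr1 (drop (size u1)) E.
  rewrite drop_size_cat // drop_cat.
  case: ltnP => // H2.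
  have -> : size u1 = size u2 by apply/eqP; rewrite eqn_leq Hs H2.
  by rewrite subnn drop0 drop_size.
by rewrite size_drop subnKC.
Qed.
End Aux.

Theorem mainTheorem2 (Q Sigma : finType) (M : nfa Q Sigma) :
  simple M ->
  (simple (nfa_loop M) <->
   ~ (exists (s : Sigma) (qa q : Q),
        [/\ qa \in starts M, q <> qa & qa \in delta M q s])).
Proof.
move=> [Hacc [Hne Hdis]]; split.
- move=> [_ [Lne Ldis]] [s [qa [q [Hqa Hq Hd]]]].
  have [w /langE [f [Hf HF]]] := Lne qa.
  apply: (Ldis q qa Hq (s :: w)); split; apply/langE; exists f; split=> //=;
    apply/bigcupP; exists qa => //.
  + exact: (subsetP (loop_sub M q s)).
  + by rewrite /loop_delta Hqa; apply: setU11.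
- move=> Hn; split; [|split].
  + move=> q; have [qa [w [Hqa Hq]]] := Hacc q; exists qa, w; split=> //.
    exact: (subsetP (hat_mono (loop_sub M) w qa)).
  + move=> q; have [w /langE [f [Hf HF]]] := Hne q; exists w; apply/langE.
    exists f; split=> //; exact: (subsetP (hat_mono (loop_sub M) w q)).
  + have key : forall q1 q2 u1 v1 u2 v2 f1 f2, q1 <> q2 ->
        size u1 <= size u2 -> u1 ++ v1 = u2 ++ v2 ->
        f1 \in hat_delta (delta M) q1 v1 -> f1 \in finals M ->
        f2 \in hat_delta (delta M) q2 v2 -> f2 \in finals M ->
        (u2 = [::] \/ q2 \in starts M) -> False.
      move=> q1 q2 u1 v1 u2 v2 f1 f2 Hne12 Hs E H1 F1 H2 F2 Hu2.
      have [t [Et St]] := split_le Hs E; subst v1.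
      have [p [Hp Hf1]] := (hat_cat _ _ _ _ _).1 H1; clear H1 E.
      have Hpq : p <> q2.
        move=> Ep; subst p; case: t St Hp => [|a t] St Hp.
          by move: Hp => /= /set1P E1; apply: Hne12.
        case: Hu2 => [Eu|Hs2]; first by rewrite Eu /= addnS in St.
        by apply: Hne12; apply: (unreach Hn Hs2 Hp).
      apply: (Hdis p q2 Hpq v2); split; apply/langE; [exists f1|exists f2]; by [].
    move=> q1 q2 Hne12 w [/langE [f1 [H1 F1]] /langE [f2 [H2 F2]]].
    have [u1 [v1 [E1 G1 U1]]] := loop_decomp Hn H1.
    have [u2 [v2 [E2 G2 U2]]] := loop_decomp Hn H2.
    have E : u1 ++ v1 = u2 ++ v2 by rewrite -E1 -E2.
    case: (leqP (size u1) (size u2)) => Hs.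
      exact: (key q1 q2 u1 v1 u2 v2 f1 f2).
    apply: (key q2 q1 u2 v2 u1 v1 f2 f1) => //; last exact: ltnW.
    by move=> H; apply: Hne12.
Qed.
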